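(* Let $P$ be a $d$-simplex ($d\ge2$) in general position with vertices $v_1,\dots,v_{d+1}$. Then (i) for every $1\le i\le d$ and every $\sigma\in\mathfrak S_d$ with $\sigma(d)=i$, $\operatorname{sign}(F_i)=\operatorname{sign}\big(\det X(\sigma,d)/\det X(\sigma,d-1)\big)$; (ii) for every $\sigma\in\mathfrak S_d$, $\operatorname{sign}(F_{d+1})=-\operatorname{sign}\big(\det X(\sigma,d)/\det Y(\sigma,d)\big)=-\operatorname{sign}(z(\sigma,d))$.
   Context: Write $v_i=(x_{i,1},\dots,x_{i,d})$ and let $F_i$ be the facet of $P$ opposite $v_i$ (spanned by all vertices except $v_i$). For $\sigma\in\mathfrak S_d$ and $1\le k\le d$, $X(\sigma,k)$ is the $(k+1)\times(k+1)$ matrix whose $r$-th row is $(1,x_{\sigma(r),1},\dots,x_{\sigma(r),k})$ for $r=1,\dots,k$ and whose last row is $(1,x_{d+1,1},\dots,x_{d+1,k})$; $Y(\sigma,k)$ is the $k\times k$ matrix whose $r$-th row is $(1,x_{\sigma(r),1},\dots,x_{\sigma(r),k-1})$, $r=1,\dots,k$; and $z(\sigma,k)=\det X(\sigma,k)/\det Y(\sigma,k)$. $\pi$ forgets the last coordinate, $\pi^{(j)}$ the last $j$ coordinates. $P$ is in general position if for every $0\le k\le d-1$ and every $(k+1)$-subset $U$ of its vertices, $\pi^{(d-k)}(\mathrm{conv}(U))$ is a $k$-simplex. For $y\in\pi(P)$, $n(y,P),p(y,P)$ are the lowest and highest points of $P\cap\pi^{-1}(y)$ in the last coordinate; $NB(P)$,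 $PB(P)$ are the sets of all such points. A facet $F$ is positive ($\operatorname{sign}(F)=+1$) if some relative interior point of $F$ lies in $PB(P)$ and negative ($\operatorname{sign}(F)=-1$) if some relative interior point lies in $NB(P)$. *)

(* Defs.v *)
From HB Require Import structures.
From mathcomp Require Import all_boot all_order all_algebra all_fingroup.
Set Implicit Arguments. Unset Strict Implicit. Unset Printing Implicit Defensive.
Import Order.TTheory GRing.Theory Num.Theory.
Local Open Scope ring_scope.

Section Defs.
Variable R : realFieldType.

(* 0-based coordinate access with default 0 *)
Definition getc (d : nat) (p : 'rV[R]_d) (j : nat) : R :=
  match @insub nat (fun j => (j < d)%N) 'I_d j with Some j' => p 0 j' | None => 0 end.

Definition projk (d k : nat) (p : 'rV[R]_d) : 'rV[R]_k := \row_(j < k) getc p j.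

Definition conv_on (n m : nat) (A : {set 'I_n}) (w : 'I_n -> 'rV[R]_m) (x : 'rV[R]_m) : Prop :=
  exists l : 'I_n -> R, (forall j, 0 <= l j) /\ (forall j, j \notin A -> l j = 0) /\
    \sum_j l j = 1 /\ x = \sum_j l j *: w j.

Definition aff_on (n m : nat) (A : {set 'I_n}) (w : 'I_n -> 'rV[R]_m) (x : 'rV[R]_m) : Prop :=
  exists l : 'I_n -> R, (forall j, j \notin A -> l j = 0) /\
    \sum_j l j = 1 /\ x = \sum_j l j *: w j.

Definition aff_indep (n m : nat) (A : {set 'I_n}) (w : 'I_n -> 'rV[R]_m) : Prop :=
  forall l : 'I_n -> R, (forall j, j \notin A -> l j = 0) ->
    \sum_j l j = 0 -> \sum_j l j *: w j = 0 -> forall j, l j = 0.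

Definition relint_on (n m : nat) (A : {set 'I_n}) (w : 'I_n -> 'rV[R]_m) (x : 'rV[R]_m) : Prop :=
  conv_on A w x /\ exists e : R, 0 < e /\
    forall y, aff_on A w y -> (forall j, `|y 0 j - x 0 j| < e) -> conv_on A w y.

Variable d : nat.
Variable v : 'I_d.+1 -> 'rV[R]_d.

Definition is_simplex : Prop := aff_indep [set: 'I_d.+1] v.

Definition general_position : Prop :=
  forall k : nat, (k < d)%N -> forall U : {set 'I_d.+1}, #|U| = k.+1 ->
    aff_indep U (fun i => projk k (v i)).

Definition polyP (x : 'rV[R]_d) : Prop := conv_on [set: 'I_d.+1] v x.

Definition in_PB (x : 'rV[R]_d) : Prop :=
  polyP x /\ forall y, polyP y -> projk d.-1 y = projk d.-1 x -> getc y d.-1 <= getc x d.-1.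
Definition in_NB (x : 'rV[R]_d) : Prop :=
  polyP x /\ forall y, polyP y -> projk d.-1 y = projk d.-1 x -> getc x d.-1 <= getc y d.-1.

Definition facet_pos (i : 'I_d.+1) : Prop :=
  exists x, relint_on [set~ i] v x /\ in_PB x.
Definition facet_neg (i : 'I_d.+1) : Prop :=
  exists x, relint_on [set~ i] v x /\ in_NB x.

(* vertex v_{sigma(r)} for a 0-based row index r < d *)
Definition vsig (s : 'S_d) (r : nat) : 'rV[R]_d :=
  match @insub nat (fun j => (j < d)%N) 'I_d r with
  | Some r' => v (widen_ord (leqnSn d) (s r')) | None => 0 end.

Definition Xmat (s : 'S_d) (k : nat) : 'M[R]_k.+1 :=
  \matrix_(r < k.+1, c < k.+1)
    (if c == 0 :> nat then 1
     else getc (if (r < k)%N then vsig s r else v ord_max) c.-1).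

Definition Ymat (s : 'S_d) (k : nat) : 'M[R]_k :=
  \matrix_(r < k, c < k) (if c == 0 :> nat then 1 else getc (vsig s r) c.-1).

Definition zval (s : 'S_d) (k : nat) : R := \det (Xmat s k) / \det (Ymat s k).

End Defs.

(* Main.v *)
Require Import Defs.
From HB Require Import structures.
From mathcomp Require Import all_boot all_order all_algebra all_fingroup.
From mathcomp Require Import ring lra zify.
Import Order.TTheory GRing.Theory Num.Theory.
Set Implicit Arguments. Unset Strict Implicit. Unset Printing Implicit Defensive.
Local Open Scope ring_scope.

Section Basic.
Variable R : realFieldType.

Lemma getc_ord d (p : 'rV[R]_d) (j : 'I_d) : getc p j = p 0 j.
Proof.
rewrite /getc; case: insubP => [j' _ /val_inj -> //|]; by rewrite ltn_ord.
Qed.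

Lemma getc_ge d (p : 'rV[R]_d) (j : nat) : (d <= j)%N -> getc p j = 0.
Proof.
move=> hj; rewrite /getc; case: insubP => [j' hj' _|//].
by rewrite ltnNge hj in hj'.
Qed.

Lemma getc_sum d n (l : 'I_n -> R) (w : 'I_n -> 'rV[R]_d) j :
  getc (\sum_k l k *: w k) j = \sum_k l k * getc (w k) j.
Proof.
case: (ltnP j d) => hj.
  have -> : j = val (Ordinal hj) by [].
  rewrite !getc_ord summxE; apply: eq_bigr => k _; by rewrite mxE getc_ord.
rewrite getc_ge //; rewrite big1 // => k _; by rewrite getc_ge ?mulr0.
Qed.

Lemma getc_lin d (a b : R) (x y : 'rV[R]_d) j :
  getc (a *: x + b *: y) j = a * getc x j + b * getc y j.
Proof.
case: (ltnP j d) => hj.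
  have -> : j = val (Ordinal hj) by [].
  by rewrite !getc_ord !mxE.
by rewrite !getc_ge ?mulr0 ?addr0.
Qed.

Lemma projk_id d (p : 'rV[R]_d) : projk d p = p.
Proof. apply/rowP => j; by rewrite mxE getc_ord. Qed.

Lemma term_le_sum (I : finType) (F : I -> R) (j : I) :
  (forall k, 0 <= F k) -> F j <= \sum_k F k.
Proof.
move=> h; rewrite (bigD1 j) //= lerDl; apply: sumr_ge0 => k _; exact: h.
Qed.

Lemma indep_det m n (U : {set 'I_n}) (w : 'I_n -> 'rV[R]_m)
  (g : 'I_m.+1 -> 'I_n) (A : 'M[R]_m.+1) :
  injective g -> (forall r, g r \in U) -> aff_indep U w ->
  (forall r, A r 0 = 1) -> (forall r (c : 'I_m), A r (lift 0 c) = w (g r) 0 c) ->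
  \det A != 0.
Proof.
move=> ginj gU hind hA0 hA1; apply/negP => /det0P [u u0 uA].
pose l j := \sum_r (if g r == j then u 0 r else 0).
have hl : forall r, l (g r) = u 0 r.
  move=> r; rewrite /l (bigD1 r) //= eqxx big1 ?addr0 // => r' hr'.
  by rewrite (inj_eq ginj) (negPf hr').
have sumE (G : 'I_n -> R) : \sum_j l j * G j = \sum_r u 0 r * G (g r).
  rewrite /l; under eq_bigr do rewrite mulr_suml.
  rewrite exchange_big /=; apply: eq_bigr => r _.
  rewrite (bigD1 (g r)) //= eqxx big1 ?addr0 // => j /negPf.
  by rewrite eq_sym => ->; rewrite mul0r.
have := hind l.
have l0 : forall j, j \notin U -> l j = 0.
  move=> j hj; rewrite /l big1 // => r _; case: eqP => // e.
  by move: hj; rewrite -e gU.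
have s0 : \sum_j l j = 0.
  have := sumE (fun _ => 1); under eq_bigr do rewrite mulr1.
  move=> ->; under eq_bigr do rewrite mulr1.
  have h := congr1 (fun M : 'M[R]_(1, m.+1) => M 0 0) uA; rewrite !mxE in h.
  apply: etrans h; by apply: eq_bigr => r _; rewrite hA0 mulr1.
have s1 : \sum_j l j *: w j = 0.
  apply/rowP => c; rewrite summxE mxE.
  under eq_bigr do rewrite mxE.
  rewrite (sumE (fun j => w j 0 c)).
  have h := congr1 (fun M : 'M[R]_(1, m.+1) => M 0 (lift 0 c)) uA; rewrite !mxE in h.
  apply: etrans h; by apply: eq_bigr => r _; rewrite hA1.
move=> /(_ l0 s0 s1) hz; move/eqP: u0; apply; apply/rowP => r.
by rewrite mxE -hl hz.
Qed.

Lemma getc_close d (x y : 'rV[R]_d) (e : R) : 0 < e ->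
  (forall k, `|y 0 k - x 0 k| < e) -> forall j, `|getc y j - getc x j| < e.
Proof.
move=> e0 h j; case: (ltnP j d) => hj.
  have -> : j = val (Ordinal hj) by [].
  by rewrite !getc_ord.
by rewrite !getc_ge // subrr normr0.
Qed.

End Basic.

Section Core.
Variable R : realFieldType.
Variable n : nat.
Variable v : 'I_n.+2 -> 'rV[R]_n.+1.
Variable i : 'I_n.+2.
Variable a0 : R.
Variable a : 'I_n.+1 -> R.
Hypothesis a_max : a ord_max = 1.
Definition phi (z : 'rV[R]_n.+1) := a0 + \sum_k a k * z 0 k.
Hypothesis phi_facet : forall j, j != i -> phi (v j) = 0.
Hypothesis phi_vi : phi (v i) != 0.
Definition Mi : 'M[R]_n.+1 :=
  \matrix_(r, c) (if c == 0 :> nat then 1 else getc (v (lift i r)) c.-1).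
Hypothesis Munit : Mi \in unitmx.
Definition rowz (z : 'rV[R]_n.+1) : 'rV[R]_n.+1 :=
  \row_c (if c == 0 :> nat then 1 else getc z c.-1).

Lemma phi_comb (l : 'I_n.+2 -> R) (z : 'I_n.+2 -> 'rV[R]_n.+1) :
  \sum_j l j = 1 -> phi (\sum_j l j *: z j) = \sum_j l j * phi (z j).
Proof.
move=> hl; rewrite /phi.
under [RHS]eq_bigr do rewrite mulrDr.
rewrite big_split /= -mulr_suml hl mul1r; congr (_ + _).
under eq_bigr do rewrite summxE mulr_sumr.
rewrite exchange_big /=; apply: eq_bigr => j _; rewrite mulr_sumr.
by apply: eq_bigr => k _; rewrite mxE mulrCA.
Qed.

Lemma phi_aff2 (al be : R) z w : al + be = 1 ->
  phi (al *: z + be *: w) = al * phi z + be * phi w.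
Proof.
move=> hab; rewrite /phi.
under eq_bigr do rewrite !mxE mulrDr mulrCA [a _ * (be * _)]mulrCA.
rewrite big_split /= -!mulr_sumr.
have -> : be = 1 - al by lra.
ring.
Qed.

Lemma getcW (z : 'rV[R]_n.+1) (k : 'I_n) :
  getc z k = z 0 (widen_ord (leqnSn n) k).
Proof. exact: (getc_ord z (widen_ord (leqnSn n) k)). Qed.

Lemma getcL (z : 'rV[R]_n.+1) : getc z n = z 0 ord_max.
Proof. exact: (getc_ord z ord_max). Qed.

Lemma phi_fiber y x : projk n y = projk n x ->
  phi y - phi x = getc y n - getc x n.
Proof.
move=> h; rewrite !getcL /phi !big_ord_recr /= a_max !mul1r.
have -> : \sum_(k < n) a (widen_ord (leqnSn n) k) * y 0 (widen_ord (leqnSn n) k)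
  = \sum_(k < n) a (widen_ord (leqnSn n) k) * x 0 (widen_ord (leqnSn n) k).
  apply: eq_bigr => k _; congr (_ * _).
  have := congr1 (fun M : 'rV[R]_n => M 0 k) h; by rewrite !mxE !getcW.
ring.
Qed.

Lemma comb_mx (l : 'I_n.+2 -> R) : l i = 0 ->
  \row_r l (lift i r) *m Mi =
  \row_c (if c == 0 :> nat then \sum_j l j else getc (\sum_j l j *: v j) c.-1).
Proof.
move=> li; apply/rowP => c; rewrite mxE [RHS]mxE.
under eq_bigr do rewrite !mxE.
case: (boolP (c == 0 :> nat)) => c0.
  rewrite (bigD1_ord i) //= li add0r; apply: eq_bigr => r _.
  by rewrite ?c0 mulr1.
rewrite getc_sum (bigD1_ord i) //= li mul0r add0r; apply: eq_bigr => r _.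
by rewrite ?(negbTE c0).
Qed.

Lemma coef (l : 'I_n.+2 -> R) : l i = 0 -> \sum_j l j = 1 ->
  \row_r l (lift i r) = rowz (\sum_j l j *: v j) *m invmx Mi.
Proof.
move=> li ls.
have h : \row_r l (lift i r) *m Mi = rowz (\sum_j l j *: v j).
  by rewrite comb_mx //; apply/rowP => c; rewrite !mxE ls.
by rewrite -h mulmxK.
Qed.

Lemma phi_face (l : 'I_n.+2 -> R) : \sum_j l j = 1 ->
  phi (\sum_j l j *: v j) = l i * phi (v i).
Proof.
move=> ls; rewrite phi_comb // (bigD1 i) //= big1 ?addr0 // => j hj.
by rewrite phi_facet // mulr0.
Qed.

Definition Bprop (eps : R) (x : 'rV[R]_n.+1) := Defs.polyP v x /\
  forall y, Defs.polyP v y -> projk n y = projk n x -> eps * (getc y n - getc x n) <= 0.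

Definition lbar (j : 'I_n.+2) : R := if j == i then 0 else (n.+1)%:R^-1.

Lemma lbar_sum : \sum_j lbar j = 1.
Proof.
rewrite (bigD1_ord i) //= /lbar eqxx add0r.
under eq_bigr do rewrite eq_sym (negbTE (neq_lift _ _)).
by rewrite sumr_const card_ord -[_ *+ _]mulr_natr mulVf // pnatr_eq0.
Qed.

Lemma lbar_ge0 j : 0 <= lbar j.
Proof. rewrite /lbar; case: ifP => _ //; by rewrite invr_ge0 ler0n. Qed.

Lemma core_if eps : eps * phi (v i) < 0 ->
  exists x, relint_on [set~ i] v x /\ Bprop eps x.
Proof.
move=> hneg.
pose K : R := (n.+1)%:R.
have K0 : 0 < K by rewrite ltr0n.
pose xb := \sum_j lbar j *: v j.
pose N := invmx Mi.
pose S := \sum_c \sum_r `|N c r|.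
have S0 : 0 <= S by apply: sumr_ge0 => c _; apply: sumr_ge0 => r _.
pose e := (K * (S + 1))^-1.
have e0 : 0 < e by rewrite invr_gt0 mulr_gt0 // ltr_wpDl.
have eS : e * S < K^-1.
  rewrite /e invfM -mulrA gtr_pMr ?invr_gt0 //.
  by rewrite mulrC ltr_pdivrMr ?ltr_wpDl // mul1r ltrDl.
have lbi : lbar i = 0 by rewrite /lbar eqxx.
exists xb; split; last first.
  split.
    exists lbar; split; first exact: lbar_ge0.
    split; first by move=> j; rewrite in_setT.
    by split; [exact: lbar_sum|].
  move=> y [mu [mu0 [_ [mus ->]]]] hp.
  rewrite -phi_fiber // !phi_face // ?lbar_sum // lbi mul0r subr0.
  by rewrite mulrCA mulr_ge0_le0 // ltW.
split.
  exists lbar; split; first exact: lbar_ge0.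
  split; first by move=> j; rewrite in_setC1 negbK => /eqP ->.
  by split; [exact: lbar_sum|].
exists e; split => // y [l [l0 [ls ly]]] hy.
have li : l i = 0 by apply: l0; rewrite in_setC1 eqxx.
exists l; split; last by [].
move=> j; case: (unliftP i j) => [r ->|->]; last by rewrite li.
have hL := coef li ls; rewrite -ly in hL.
have hb := coef lbi lbar_sum; rewrite -/xb in hb.
have e1 : l (lift i r) = (rowz y *m N) 0 r.
  by rewrite -hL mxE.
have e2 : K^-1 = (rowz xb *m N) 0 r.
  by rewrite -hb mxE /lbar eq_sym (negbTE (neq_lift _ _)).
have bnd : `|(rowz y *m N) 0 r - (rowz xb *m N) 0 r| <= e * S.
  have -> : (rowz y *m N) 0 r - (rowz xb *m N) 0 r =
     \sum_c (rowz y 0 c - rowz xb 0 c) * N c r.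
    rewrite !mxE -sumrB; apply: eq_bigr => c _; by rewrite mulrBl.
  apply: le_trans (ler_norm_sum _ _ _) _.
  apply: (@le_trans _ _ (\sum_c e * `|N c r|)).
    apply: ler_sum => c _; rewrite normrM ler_wpM2r //.
    rewrite !mxE; case: ifP => _; first by rewrite subrr normr0 ltW.
    apply: ltW; exact: getc_close e0 hy _.
  rewrite -mulr_sumr (ler_wpM2l (ltW e0)) //.
  apply: ler_sum => c _; apply: (@term_le_sum _ _ (fun r0 => `|N c r0|) r) => k.
  exact: normr_ge0.
rewrite e1; move: bnd; rewrite -e2 ler_norml => /andP [h1 h2].
have : 0 < K^-1 - e * S by rewrite subr_gt0.
move=> h3; clearbody K e S N; lra.
Qed.
Lemma core_oif eps : eps != 0 ->
  (exists x, relint_on [set~ i] v x /\ Bprop eps x) -> eps * phi (v i) < 0.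
Proof.
move=> eps0 [x [[[lx [lx0 [lxs [lxsum lxe]]]] [e [e0 he]]] [_ hB]]].
rewrite ltNge; apply/negP => hge.
have hpos : 0 < eps * phi (v i).
  by rewrite lt_def hge andbT mulf_neq0.
have lxi : lx i = 0 by apply: lxs; rewrite in_setC1 eqxx.
have phix : phi x = 0 by rewrite lxe phi_face // lxi mul0r.
pose N := invmx Mi.
pose Lq := rowz (v i) *m N.
pose lq (j : 'I_n.+2) : R := if unlift i j is Some r then Lq 0 r else 0.
have lqi : lq i = 0 by rewrite /lq unlift_none.
have hq : \row_r lq (lift i r) *m Mi = rowz (v i).
  have -> : \row_r lq (lift i r) = Lq by apply/rowP => r; rewrite mxE /lq liftK.
  by rewrite mulmxKV.
have hc := comb_mx lqi; rewrite hq in hc.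
have lqs : \sum_j lq j = 1.
  have := congr1 (fun M : 'rV[R]_n.+1 => M 0 0) hc; by rewrite !mxE /= => ->.
pose q := \sum_j lq j *: v j.
have qk : forall k : 'I_n, q 0 (widen_ord (leqnSn n) k) = v i 0 (widen_ord (leqnSn n) k).
  move=> k; have := congr1 (fun M : 'rV[R]_n.+1 => M 0 (lift 0 k)) hc.
  by rewrite !mxE /= -!getcW => <-.
have phiq : phi q = 0 by rewrite phi_face // lqi mul0r.
pose T := \sum_k `|x 0 k - q 0 k|.
have T0 : 0 <= T by apply: sumr_ge0 => k _.
pose s := e / (T + 1).
have s0 : 0 < s by rewrite divr_gt0 // ltr_wpDl.
have s1 : 1 + s != 0 by rewrite gt_eqF // ltr_wpDr // ltW.
pose x2 := (1 + s) *: x + (- s) *: q.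
have hx2 : aff_on [set~ i] v x2.
  exists (fun j => (1 + s) * lx j + (- s) * lq j); split.
    by move=> j; rewrite in_setC1 negbK => /eqP ->; rewrite lxi lqi !mulr0 addr0.
  split.
    by rewrite big_split /= -!mulr_sumr lxsum lqs; ring.
  rewrite /x2 lxe /q !scaler_sumr -big_split /=.
  by apply: eq_bigr => j _; rewrite !scalerA -scalerDl.
have cl : forall k, `|x2 0 k - x 0 k| < e.
  move=> k; have -> : x2 0 k - x 0 k = s * (x 0 k - q 0 k) by rewrite !mxE; ring.
  rewrite normrM gtr0_norm //.
  apply: (@le_lt_trans _ _ (s * T)).
    rewrite (ler_wpM2l (ltW s0)) //.
    apply: (@term_le_sum _ _ (fun k0 => `|x 0 k0 - q 0 k0|) k) => k0; exact: normr_ge0.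
  rewrite /s mulrAC -mulrA gtr_pMr // ltr_pdivrMr ?ltr_wpDl // mul1r.
  by rewrite ltrDl.
have [mu [mu0 [mus [musum mue]]]] := he x2 hx2 cl.
pose y := (1 + s)^-1 *: x2 + (s / (1 + s)) *: v i.
have py : Defs.polyP v y.
  exists (fun j => (1 + s)^-1 * mu j + (if j == i then s / (1 + s) else 0)).
  split.
    move=> j; apply: addr_ge0; first by rewrite mulr_ge0 // invr_ge0 ltW // ltr_wpDr // ltW.
    case: ifP => _ //; by rewrite divr_ge0 // ltW // ltr_wpDr // ltW.
  split; first by move=> j; rewrite in_setT.
  split.
    rewrite big_split /= -mulr_sumr musum (bigD1 i) //= eqxx big1 ?addr0.
      by field.
    by move=> j /negPf ->.
  rewrite /y mue scaler_sumr.
  have -> : (s / (1 + s)) *: v i = \sum_j (if j == i then s / (1 + s) else 0) *: v j.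
    rewrite (bigD1 i) //= eqxx big1 ?addr0 // => j /negPf ->; by rewrite scale0r.
  rewrite -big_split /=; apply: eq_bigr => j _; by rewrite scalerDl scalerA.
have pr : projk n y = projk n x.
  apply/rowP => k; rewrite !mxE !getcW !mxE qk; by field.
have := hB y py pr.
rewrite -phi_fiber // phix subr0 /y phi_aff2; last by field.
rewrite /x2 phi_aff2; last by ring.
rewrite phix phiq !mulr0 addr0 mulr0 add0r mulrCA.
apply/negP; rewrite -ltNge; apply: mulr_gt0 => //.
by rewrite divr_gt0 // ltr_wpDr // ltW.
Qed.

End Core.

Lemma core_iff (R : realFieldType) n (v : 'I_n.+2 -> 'rV[R]_n.+1) i a0 a
  (a_max : a ord_max = 1)
  (phi_facet : forall j, j != i -> phi a0 a (v j) = 0)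
  (phi_vi : phi a0 a (v i) != 0)
  (Munit : Mi v i \in unitmx) (eps : R) : eps != 0 ->
  (exists x, relint_on [set~ i] v x /\ Bprop v eps x) <-> eps * phi a0 a (v i) < 0.
Proof.
move=> e0; split; first exact: core_oif.
exact: core_if.
Qed.

Section Bridge.
Variable R : realFieldType.
Variable n : nat.
Variable v : 'I_n.+3 -> 'rV[R]_n.+2.
Hypothesis hgp : general_position v.
Variable i : 'I_n.+3.
Variable A : 'M[R]_n.+3.
Variable w : 'I_n.+3 -> 'rV[R]_n.+2.
Hypothesis hA : forall r c, A r c = if c == 0 :> nat then 1 else getc (w r) c.-1.
Variable p : 'I_n.+3.
Hypothesis hwp : w p = v i.
Hypothesis hw : forall j, j != i -> exists r, r != p /\ w r = v j.
Hypothesis hdet : \det A != 0.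
Hypothesis hc : cofactor A p (lift 0 ord_max) != 0.

Let c := cofactor A p (lift 0 ord_max).
Let a0 := cofactor A p 0 / c.
Let a (k : 'I_n.+2) := cofactor A p (lift 0 k) / c.

Lemma phi_w r : phi a0 a (w r) = (\sum_c' A r c' * cofactor A p c') / c.
Proof.
rewrite /phi [X in _ = X / _]big_ord_recl hA /= mul1r mulrDl mulr_suml; congr (_ + _).
apply: eq_bigr => k _; rewrite hA /= getc_ord /a; by rewrite mulrC mulrA.
Qed.

Lemma bridge_Munit : Mi v i \in unitmx.
Proof.
rewrite unitmxE unitfE.
have hU : #|[set~ i]| = n.+2 by rewrite cardsC1 card_ord.
have := hgp (ltnSn n.+1) hU => hind.
apply: (indep_det (g := lift i) _ _ hind).
- exact: lift_inj.
- by move=> r; rewrite in_setC1 eq_sym neq_lift.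
- by move=> r; rewrite mxE.
- by move=> r k; rewrite !mxE.
Qed.

Lemma bridge :
  (facet_pos v i <-> \det A / c < 0) /\ (facet_neg v i <-> 0 < \det A / c).
Proof.
have amax : a ord_max = 1 by rewrite /a divff.
have pvi : phi a0 a (v i) = \det A / c by rewrite -hwp phi_w -expand_det_row.
have pf : forall j, j != i -> phi a0 a (v j) = 0.
  move=> j /hw [r [rp <-]].
  have := congr1 (fun M : 'M[R]_n.+3 => M r p) (mul_mx_adj A).
  rewrite !mxE (negbTE rp) mulr0n => h.
  rewrite phi_w (_ : \sum_c' A r c' * cofactor A p c' = 0) ?mul0r //.
  apply: (etrans _ h); apply: eq_bigr => k _; by rewrite mxE.
have pv0 : phi a0 a (v i) != 0 by rewrite pvi mulf_neq0 // invr_eq0.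
have Mu := bridge_Munit.
split.
  rewrite -[X in _ <-> X < 0]mul1r -pvi.
  rewrite -(core_iff amax pf pv0 Mu (oner_neq0 R)).
  split; move=> [x [h1 [h2 h3]]]; exists x; split => //; split => // y hy hyx.
    by rewrite mul1r subr_le0; apply: h3.
  by have := h3 y hy hyx; rewrite mul1r subr_le0.
have -> : (0 < \det A / c) <-> (-1 * phi a0 a (v i) < 0).
  by rewrite pvi mulN1r oppr_lt0.
rewrite -(core_iff amax pf pv0 Mu (_ : -1 != 0 :> R)); last by rewrite oppr_eq0 oner_neq0.
split; move=> [x [h1 [h2 h3]]]; exists x; split => //; split => // y hy hyx.
  by rewrite mulN1r oppr_le0 subr_ge0; apply: h3.
by have := h3 y hy hyx; rewrite mulN1r oppr_le0 subr_ge0.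
Qed.

End Bridge.

Lemma vsig_ord (R : realFieldType) d (v : 'I_d.+1 -> 'rV[R]_d) (s : 'S_d) (r : 'I_d) :
  vsig v s r = v (widen_ord (leqnSn d) (s r)).
Proof.
rewrite /vsig; case: insubP => [r' _ /val_inj -> //|]; by rewrite ltn_ord.
Qed.

Section Main.
Variable R : realFieldType.
Variable n : nat.
Variable v : 'I_n.+3 -> 'rV[R]_n.+2.
Hypothesis hsimp : is_simplex v.
Hypothesis hgp : general_position v.
Variable s : 'S_n.+2.

Let wX (r : 'I_n.+3) := if (r < n.+2)%N then vsig v s r else v ord_max.

Lemma hAX r c : Xmat v s n.+2 r c = if c == 0 :> nat then 1 else getc (wX r) c.-1.
Proof. by rewrite mxE. Qed.

Lemma vsig_nat (r : nat) : (r < n.+2)%N -> vsig v s r = v (widen_ord (leqnSn _) (s (inord r))).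
Proof. move=> hr; rewrite -vsig_ord; congr (vsig v s _); by rewrite inordK. Qed.

Lemma detX_neq0 : \det (Xmat v s n.+2) != 0.
Proof.
pose g (r : 'I_n.+3) : 'I_n.+3 :=
  if (r < n.+2)%N then widen_ord (leqnSn _) (s (inord r)) else ord_max.
apply: (indep_det (U := [set: 'I_n.+3]) (w := v) (g := g)).
- move=> r1 r2; rewrite /g; case: ifP => h1; case: ifP => h2.
  + move=> /(congr1 val) /= /val_inj /perm_inj /(congr1 (@nat_of_ord _)).
    by rewrite !inordK // => /val_inj.
  + move=> /(congr1 val) /= e; have := ltn_ord (s (inord r1)); by rewrite e ltnn.
  + move=> /(congr1 val) /= e; have := ltn_ord (s (inord r2)); by rewrite -e ltnn.
  + move=> _; apply: val_inj; move: (ltn_ord r1) (ltn_ord r2) h1 h2 => /= l1 l2 h1 h2.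
    move/negbT: h1; move/negbT: h2; lia.
- by move=> r; rewrite in_setT.
- exact: hsimp.
- by move=> r; rewrite mxE.
- move=> r c; rewrite mxE /= getc_ord /g; case: ifP => h //.
  by rewrite vsig_nat.
Qed.

Lemma lift0max : lift 0 (ord_max : 'I_n.+2) = ord_max :> 'I_n.+3.
Proof. by apply: val_inj. Qed.

Lemma cofY : cofactor (Xmat v s n.+2) ord_max (lift 0 ord_max) = \det (Ymat v s n.+2).
Proof.
rewrite /cofactor lift0max addnn -signr_odd odd_double expr0 mul1r.
congr (\det _); apply/matrixP => r c; rewrite !mxE !lift_max /= ltn_ord.
done.
Qed.

Lemma detY_neq0 : \det (Ymat v s n.+2) != 0.
Proof.
have hU : #|[set~ (ord_max : 'I_n.+3)]| = n.+2 by rewrite cardsC1 card_ord.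
have hind := hgp (ltnSn n.+1) hU.
apply: (indep_det (g := fun r => widen_ord (leqnSn _) (s r)) _ _ hind).
- move=> r1 r2 /(congr1 val) /= /val_inj; exact: perm_inj.
- move=> r; rewrite in_setC1; apply/eqP => /(congr1 val) /= e.
  have := ltn_ord (s r); by rewrite e ltnn.
- by move=> r; rewrite mxE.
- by move=> r c; rewrite !mxE /= vsig_ord.
Qed.

Lemma wX_perm (j : 'I_n.+3) (hjl : (val j < n.+2)%N) :
  let r := widen_ord (leqnSn _) ((s^-1)%g (Ordinal hjl)) in wX r = v j.
Proof.
rewrite /wX /= ltn_ord vsig_ord permKV; congr v; exact: val_inj.
Qed.

Lemma ltmax (j : 'I_n.+3) : j != ord_max -> (val j < n.+2)%N.
Proof.
move=> hj; move: (ltn_ord j); rewrite ltnS leq_eqVlt => /orP [/eqP e|//].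
case/negP: hj; apply/eqP; apply: val_inj; exact: e.
Qed.

Lemma case_ii : (facet_pos v ord_max <-> \det (Xmat v s n.+2) / \det (Ymat v s n.+2) < 0)
  /\ (facet_neg v ord_max <-> 0 < \det (Xmat v s n.+2) / \det (Ymat v s n.+2)).
Proof.
have hwp : wX ord_max = v ord_max by rewrite /wX /= ltnn.
have hw : forall j, j != ord_max -> exists r, r != ord_max /\ wX r = v j.
  move=> j hj; have hjl := ltmax hj.
  exists (widen_ord (leqnSn _) ((s^-1)%g (Ordinal hjl))); split; last exact: wX_perm.
  apply/eqP => /(congr1 val) /= e; have := ltn_ord ((s^-1)%g (Ordinal hjl)).
  by rewrite e ltnn.
have hc : cofactor (Xmat v s n.+2) ord_max (lift 0 ord_max) != 0.
  by rewrite cofY detY_neq0.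
have := bridge hgp hAX hwp hw detX_neq0 hc.
by rewrite cofY.
Qed.

Variable i : 'I_n.+3.
Hypothesis hi : (i < n.+2)%N.
Hypothesis hs : forall j : 'I_n.+2, val j = n.+1 -> val (s j) = val i.

Lemma cofX : cofactor (Xmat v s n.+2) (inord n.+1) (lift 0 ord_max) = - \det (Xmat v s n.+1).
Proof.
rewrite /cofactor lift0max /= inordK //.
have -> : (-1) ^+ (n.+1 + n.+2) = -1 :> R.
  by rewrite -signr_odd addnS addnn /= odd_double /= expr1.
rewrite mulN1r; congr (- \det _); apply/matrixP => r c; rewrite !mxE lift_max /= /bump inordK //.
case: (ltnP r n.+1) => hr.
  by rewrite add0n ltn_ord.
by rewrite add1n ltnS ltnNge hr.
Qed.

Lemma detXm_neq0 : \det (Xmat v s n.+1) != 0.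
Proof.
have hU : #|[set~ i]| = n.+2 by rewrite cardsC1 card_ord.
have hind := hgp (ltnSn n.+1) hU.
pose g (r : 'I_n.+2) : 'I_n.+3 :=
  if (r < n.+1)%N then widen_ord (leqnSn _) (s r) else ord_max.
apply: (indep_det (g := g) _ _ hind).
- move=> r1 r2; rewrite /g; case: ifP => h1; case: ifP => h2.
  + by move=> /(congr1 val) /= /val_inj /perm_inj.
  + move=> /(congr1 val) /= e; have := ltn_ord (s r1); by rewrite e ltnn.
  + move=> /(congr1 val) /= e; have := ltn_ord (s r2); by rewrite -e ltnn.
  + move=> _; apply: val_inj; move: (ltn_ord r1) (ltn_ord r2) h1 h2 => /= l1 l2 h1 h2.
    move/negbT: h1; move/negbT: h2; lia.
- move=> r; rewrite in_setC1 /g; case: ifP => h.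
    apply/eqP => /(congr1 val) /= e.
    have e2 := hs (j := ord_max) erefl.
    have : s r = s ord_max by apply: val_inj; exact: (etrans e (esym e2)).
    move/perm_inj => e3; move: h; by rewrite e3 /= ltnn.
  apply/eqP => e; move: hi; by rewrite -e ltnn.
- by move=> r; rewrite mxE.
- move=> r c; rewrite !mxE /= /g; case: ifP => h //.
  by rewrite vsig_ord.
Qed.

Lemma case_i : (facet_pos v i <-> 0 < \det (Xmat v s n.+2) / \det (Xmat v s n.+1))
  /\ (facet_neg v i <-> \det (Xmat v s n.+2) / \det (Xmat v s n.+1) < 0).
Proof.
have hwp : wX (inord n.+1) = v i.
  rewrite /wX inordK // ltnSn.
  have := vsig_ord v s (ord_max : 'I_n.+2); move=> /= ->.
  congr v; apply: val_inj => /=; exact: hs.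
have hw : forall j, j != i -> exists r, r != inord n.+1 /\ wX r = v j.
  move=> j hj; case: (boolP (j == ord_max)) => hjm.
    exists ord_max; split; last by rewrite (eqP hjm) /wX /= ltnn.
    apply/eqP => /(congr1 val) /=; rewrite inordK //; lia.
  have hjl := ltmax hjm.
  exists (widen_ord (leqnSn _) ((s^-1)%g (Ordinal hjl))); split; last exact: wX_perm.
  apply/eqP => /(congr1 val) /=; rewrite inordK // => e.
  have := hs e; rewrite permKV /= => e2.
  move/eqP: hj; apply; exact: val_inj.
have hc : cofactor (Xmat v s n.+2) (inord n.+1) (lift 0 ord_max) != 0.
  by rewrite cofX oppr_eq0 detXm_neq0.
have := bridge hgp hAX hwp hw detX_neq0 hc.
by rewrite cofX invrN mulrN oppr_lt0 oppr_gt0.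
Qed.

End Main.

Unset Implicit Arguments.
Set Strict Implicit.

Theorem mainTheorem7 (R : realFieldType) (d : nat) (v : 'I_d.+1 -> 'rV[R]_d) :
  (2 <= d)%N -> is_simplex v -> general_position v ->
  (forall (i : 'I_d.+1) (s : 'S_d), (val i < d)%N ->
     (forall j : 'I_d, val j = d.-1 -> val (s j) = val i) ->
     (facet_pos v i <-> 0 < \det (Xmat v s d) / \det (Xmat v s d.-1)) /\
     (facet_neg v i <-> \det (Xmat v s d) / \det (Xmat v s d.-1) < 0))
  /\
  (forall s : 'S_d,
     (facet_pos v ord_max <-> \det (Xmat v s d) / \det (Ymat v s d) < 0) /\
     (facet_neg v ord_max <-> 0 < \det (Xmat v s d) / \det (Ymat v s d)) /\
     (facet_pos v ord_max <-> zval v s d < 0) /\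
     (facet_neg v ord_max <-> 0 < zval v s d)).
Proof.
case: d v => [|[|n]] v hd hsimp hgp //.
split.
  move=> i s hi hs; exact: (case_i hsimp hgp hi hs).
move=> s; have [bp bn] := case_ii hsimp hgp s.
by rewrite /zval.
Qed.
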